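(* Let $G$ be a torsion-free locally compact abelian group and let $H$ be an open pure subgroup of $G$. Then $G_{op}=H_{op}$.
   Context: A subgroup $H$ of an abelian group $G$ is pure if $nH=H\cap nG$ for every positive integer $n$. For an LCA group $G$, $G_{op}$ denotes the intersection of all open pure subgroups of $G$; $H$ is regarded as an LCA group with the subspace topology. *)

(* Defs.v *)
From HB Require Import structures.
From mathcomp Require Import all_boot all_order all_algebra.
From mathcomp Require Import all_classical all_reals all_analysis.
Set Implicit Arguments. Unset Strict Implicit. Unset Printing Implicit Defensive.
Import Order.TTheory GRing.Theory Num.Theory.
Local Open Scope classical_set_scope.
Local Open Scope ring_scope.

Definition is_subgroup {G : zmodType} (H : set G) : Prop :=
  H 0 /\ (forall x y, H x -> H y -> H (x - y)).

Definition nmul {G : zmodType} (n : nat) (H : set G) : set G :=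
  [set y | exists2 x, H x & y = x *+ n].

Definition pure_in {G : zmodType} (H K : set G) : Prop :=
  forall n : nat, (0 < n)%N -> nmul n K = K `&` nmul n H.

Definition open_in {G : topologicalType} (H K : set G) : Prop :=
  exists2 U : set G, open U & K = U `&` H.

Definition open_pure_subgroup_of {G : topologicalZmodType} (H K : set G) : Prop :=
  K `<=` H /\ is_subgroup K /\ open_in H K /\ pure_in H K.

Definition op_part {G : topologicalZmodType} (H : set G) : set G :=
  \bigcap_(K in [set K | open_pure_subgroup_of H K]) K.

Definition torsion_free (G : zmodType) : Prop :=
  forall (x : G) (n : nat), (0 < n)%N -> x *+ n = 0 -> x = 0.

Definition LCA (G : topologicalZmodType) : Prop :=
  hausdorff_space G /\ locally_compact [set: G].

(* Main.v *)
Require Import Defs.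
From HB Require Import structures.
From mathcomp Require Import all_boot all_order all_algebra.
From mathcomp Require Import all_classical all_reals all_analysis.
Import GRing.Theory.
Local Open Scope classical_set_scope.
Local Open Scope ring_scope.

Lemma sg_opp {G : zmodType} (K : set G) x : is_subgroup K -> K x -> K (- x).
Proof. by move=> [K0 KB] Kx; rewrite -sub0r; apply: KB. Qed.

Lemma sg_add {G : zmodType} (K : set G) x y : is_subgroup K -> K x -> K y -> K (x + y).
Proof.
move=> sK Kx Ky; rewrite -[y]opprK; case: (sK) => _ KB; apply: KB => //.
exact: sg_opp.
Qed.

Lemma sg_muln {G : zmodType} (K : set G) x n : is_subgroup K -> K x -> K (x *+ n).
Proof.
move=> sK Kx; elim: n => [|n IH]; first by rewrite mulr0n; case: sK.
by rewrite mulrS; apply: sg_add.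
Qed.

Theorem lemma7 (G : topologicalZmodType) (H : set G) :
  LCA G -> torsion_free G ->
  is_subgroup H -> open H -> pure_in [set: G] H ->
  op_part [set: G] = op_part H.
Proof.
move=> _ tf sH oH pH; apply/seteqP; split => x xG.
- move=> K [KH [sK [oK pK]]]; apply: xG; split => //; split => //; split.
    case: oK => U oU eK; exists (U `&` H); first exact: openI.
    by rewrite setIT.
  move=> n n0; rewrite (pK n n0) (pH n n0) setIA.
  rewrite (_ : K `&` H = K) //; apply/seteqP; split => [y [] //|y Ky].
  by split => //; apply: KH.
- move=> K [_ [sK [oK pK]]].
  have oK' : open K by case: oK => U oU ->; rewrite setIT.
  suff : (K `&` H) x by case.
  apply: xG; split; first by move=> y [].
  split.
    split; first by split; [case: sK|case: sH].
    by move=> a b [Ka Ha] [Kb Hb]; split; [case: sK => _; apply|case: sH => _; apply].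
  split; first by exists K.
  move=> n n0; apply/seteqP; split => y.
    case=> z [Kz Hz] ->; split; last by exists z.
    by split; apply: sg_muln.
  case=> [[Ky Hy] [z Hz ez]].
  have : nmul n K y by rewrite (pK n n0); split => //; exists z.
  case=> k Kk ek.
  have zk : z = k.
    apply/eqP; rewrite -subr_eq0; apply/eqP; apply: (tf _ n n0).
    by rewrite mulrnBl -ez -ek subrr.
  by exists z => //; split => //; rewrite zk.
Qed.
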